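(* Let $(\mathcal M_i,\phi_{ij})$ be an inverse system of local Moufang sets over a directed set $(I,\succcurlyeq)$, where $\mathcal M_i=(X_i,(U^{(i)}_x)_{x\in X_i})$. Let $L:=\{(x_i)_{i\in I}\in\prod_iX_i\mid x_i\phi_{ij}=x_j\text{ for all }i\succcurlyeq j\}$. Then for $(x_i),(y_i)\in L$, $x_i\sim y_i$ holds for some $i\in I$ iff it holds for all $i\in I$; declare $(x_i)\sim(y_i)$ in that case, an equivalence relation on $L$. For $x=(x_i)\in L$ let $U_x:=\{(u_i)\in\prod_iU^{(i)}_{x_i}\mid u_i\phi_{ij}=\phi_{ij}u_j\text{ for all }i\succcurlyeq j\}$, acting on $L$ componentwise. If $L$ has more than two $\sim$-classes, then $(L,(U_x)_{x\in L})$ is a local Moufang set, and together with the projections $p_j:L\to X_j$, $(x_i)\mapsto x_j$ (which are homomorphisms), it is an inverse limit of $(\mathcal M_i,\phi_{ij})$ in the category of local Moufang sets: $\phi_{ij}\circ p_i=p_j$ for $i\succcurlyeq j$, and for every local Moufang set $\mathcal M$ with homomorphisms $q_i:\mathcal M\to\mathcal M_i$ satisfying $\phi_{ij}\circ q_i=q_j$ there is a unique homomorphism $\psi:\mathcal M\to(L,(U_x))$ with $p_i\circ\psi=q_i$ for all $i$.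
   Context: Group actions are right actions; maps composed left to right ($u\phi$: first $u$, then $\phi$). For $(X,\sim)$, $\overline x$ is the class of $x$, $\overline X$ the set of classes, $\mathrm{Sym}(X,\sim)$ the bijections $g$ with $x\sim y\iff xg\sim yg$, $\overline U$ the induced group on $\overline X$. A local Moufang set is $(X,\sim)$ with $|\overline X|>2$ and subgroups $U_x\le\mathrm{Sym}(X,\sim)$ ($x\in X$) with: (LM0) $x\sim y\Rightarrow\overline{U_x}=\overline{U_y}$; (LM1) $U_x$ fixes $x$ and is sharply transitive on $X\setminus\overline x$; (LM1') $\overline{U_x}$ fixes $\overline x$ and is sharply transitive on $\overline X\setminus\{\overline x\}$; (LM2) $U_x^g=U_{xg}$ for all $x$ and all $g\in\langle U_y\rangle$, where $g^h=h^{-1}gh$. A homomorphism $(X,(U_x))\to(Y,(V_y))$ is a map $\phi:X\to Y$ with $x\sim x'\iff x\phi\sim x'\phi$ and $U_x\phi\subseteq\phi V_{x\phi}$ for all $x$. The category of local Moufang sets has these as objects and morphisms. A directed set is a nonempty partially ordered set in which any two elements have a common upper bound. An inverse system over $I$ consists of local Moufang sets $\mathcal M_i$ ($i\in I$) and homomorphisms $\phi_{ij}:\mathcal M_i\to\mathcal M_j$ for $i\succcurlyeq j$ with $\phi_{ii}=\mathrm{id}$ and $\phi_{jk}\circ\phi_{ij}=\phi_{ik}$ for $i\succcurlyeq j\succcurlyeq k$. *)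

(* Defs.v *)
(* Maps are composed left to right in
   the paper (right actions); here a map g is a Rocq function and "x g" is
   written (g x).  So "u then phi" is (fun z => phi (u z)). *)

Definition IsEquivRel {X : Type} (sim : X -> X -> Prop) : Prop :=
  (forall x, sim x x) /\ (forall x y, sim x y -> sim y x) /\
  (forall x y z, sim x y -> sim y z -> sim x z).

Definition Bijective {X : Type} (g : X -> X) : Prop :=
  (forall x y, g x = g y -> x = y) /\ (forall y, exists x, g x = y).

Definition InSym {X : Type} (sim : X -> X -> Prop) (g : X -> X) : Prop :=
  Bijective g /\ (forall x y, sim x y <-> sim (g x) (g y)).

Definition IsSubgroupSym {X : Type} (sim : X -> X -> Prop) (G : (X -> X) -> Prop) : Prop :=
  (forall g, G g -> InSym sim g) /\
  G (fun z => z) /\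
  (forall g h, G g -> G h -> G (fun z => h (g z))) /\
  (forall g, G g -> exists h, G h /\ (forall z, h (g z) = z) /\ (forall z, g (h z) = z)).

Definition MoreThanTwoClasses {X : Type} (sim : X -> X -> Prop) : Prop :=
  exists a b c : X, ~ sim a b /\ ~ sim a c /\ ~ sim b c.

(* The induced groups on X/~ coincide: the induced permutation of g is
   [x] |-> [g x], and two induced permutations are equal iff g z ~ h z for all z. *)
Definition InducedEq {X : Type} (sim : X -> X -> Prop) (A B : (X -> X) -> Prop) : Prop :=
  (forall g, A g -> exists h, B h /\ forall z, sim (g z) (h z)) /\
  (forall h, B h -> exists g, A g /\ forall z, sim (g z) (h z)).

(* The group <U_y | y in X> generated by all root groups: products of elements
   of the U_y (each U_y is a group, so this is closed under inverses). *)
Inductive GenBy {X : Type} (U : X -> (X -> X) -> Prop) : (X -> X) -> Prop :=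
  | GenBy_id : GenBy U (fun z => z)
  | GenBy_step : forall y u g, U y u -> GenBy U g -> GenBy U (fun z => u (g z)).

Definition IsLMS {X : Type} (sim : X -> X -> Prop) (U : X -> (X -> X) -> Prop) : Prop :=
  IsEquivRel sim /\
  MoreThanTwoClasses sim /\
  (forall x, IsSubgroupSym sim (U x)) /\
  (forall x y, sim x y -> InducedEq sim (U x) (U y)) /\
  (forall x g, U x g -> g x = x) /\
  (forall x y z, ~ sim x y -> ~ sim x z -> exists! g, U x g /\ g y = z) /\
  (forall x g, U x g -> sim (g x) x) /\
  (forall x y z, ~ sim x y -> ~ sim x z -> exists g, U x g /\ sim (g y) z) /\
  (forall x y g h, ~ sim x y -> U x g -> U x h -> sim (g y) (h y) ->
     forall w, sim (g w) (h w)) /\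
  (* LM2: U_x^g = U_{xg}, u^g = g^-1 u g, i.e. v in U_{xg} iff v = g^-1 u g
     (left to right) for some u in U_x, i.e. (as g is bijective) g;v = u;g. *)
  (forall x g, GenBy U g -> forall v, U (g x) v <-> exists u, U x u /\ forall z, v (g z) = g (u z)).

Definition IsHom {X Y : Type} (simX : X -> X -> Prop) (U : X -> (X -> X) -> Prop)
  (simY : Y -> Y -> Prop) (V : Y -> (Y -> Y) -> Prop) (f : X -> Y) : Prop :=
  (forall x x', simX x x' <-> simY (f x) (f x')) /\
  (forall x u, U x u -> exists v, V (f x) v /\ forall z, f (u z) = v (f z)).

Definition IsDirectedSet {I : Type} (ge : I -> I -> Prop) : Prop :=
  (exists i : I, True) /\
  (forall i, ge i i) /\
  (forall i j, ge i j -> ge j i -> i = j) /\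
  (forall i j k, ge i j -> ge j k -> ge i k) /\
  (forall i j, exists k, ge k i /\ ge k j).

(* Inverse system over (I, ge); phi i j is only constrained for ge i j. *)
Definition IsInverseSystem {I : Type} (ge : I -> I -> Prop) (X : I -> Type)
  (sim : forall i, X i -> X i -> Prop) (U : forall i, X i -> (X i -> X i) -> Prop)
  (phi : forall i j, X i -> X j) : Prop :=
  (forall i, IsLMS (sim i) (U i)) /\
  (forall i j, ge i j -> IsHom (sim i) (U i) (sim j) (U j) (phi i j)) /\
  (forall i x, phi i i x = x) /\
  (forall i j k, ge i j -> ge j k -> forall x, phi j k (phi i j x) = phi i k x).

Definition Lim {I : Type} (ge : I -> I -> Prop) (X : I -> Type)
  (phi : forall i j, X i -> X j) : Type :=
  { f : forall i, X i | forall i j, ge i j -> phi i j (f i) = f j }.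

Definition limProj {I : Type} {ge : I -> I -> Prop} {X : I -> Type}
  {phi : forall i j, X i -> X j} (j : I) (a : Lim ge X phi) : X j := proj1_sig a j.

Definition limSim {I : Type} {ge : I -> I -> Prop} {X : I -> Type}
  {phi : forall i j, X i -> X j} (sim : forall i, X i -> X i -> Prop)
  (a b : Lim ge X phi) : Prop :=
  exists i, sim i (limProj i a) (limProj i b).

Definition limU {I : Type} {ge : I -> I -> Prop} {X : I -> Type}
  {phi : forall i j, X i -> X j} (U : forall i, X i -> (X i -> X i) -> Prop)
  (a : Lim ge X phi) (g : Lim ge X phi -> Lim ge X phi) : Prop :=
  exists u : forall i, X i -> X i,
    (forall i, U i (limProj i a) (u i)) /\
    (forall i j, ge i j -> forall z, phi i j (u i z) = u j (phi i j z)) /\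
    (forall b i, limProj i (g b) = u i (limProj i b)).

(* Main.v *)
Require Import Defs.
From Stdlib Require Import Classical FunctionalExtensionality ProofIrrelevance ClassicalEpsilon.

Definition Compat {I : Type} (ge : I -> I -> Prop) (X : I -> Type)
  (phi : forall i j, X i -> X j) (u : forall i, X i -> X i) : Prop :=
  forall i j, ge i j -> forall z, phi i j (u i z) = u j (phi i j z).

Definition lmap {I : Type} {ge : I -> I -> Prop} {X : I -> Type}
  {phi : forall i j, X i -> X j} (u : forall i, X i -> X i)
  (Hu : Compat ge X phi u) (b : Lim ge X phi) : Lim ge X phi :=
  exist (fun f : forall i, X i => forall i j, ge i j -> phi i j (f i) = f j) (fun i => u i (proj1_sig b i))
    (fun i j H => eq_trans (Hu i j H _) (f_equal (u j) (proj2_sig b i j H))).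

Lemma lmap_proj {I : Type} {ge : I -> I -> Prop} {X : I -> Type}
  {phi : forall i j, X i -> X j} u Hu b i :
  limProj i (@lmap I ge X phi u Hu b) = u i (limProj i b).
Proof. reflexivity. Qed.

Lemma Lim_eq {I : Type} {ge : I -> I -> Prop} {X : I -> Type}
  {phi : forall i j, X i -> X j} (a b : Lim ge X phi) :
  (forall i, limProj i a = limProj i b) -> a = b.
Proof.
  destruct a as [a Ha], b as [b Hb]; unfold limProj; simpl; intro H.
  assert (a = b) by (apply functional_extensionality_dep; exact H).
  subst b. f_equal. apply proof_irrelevance.
Qed.

Lemma thr {I : Type} {ge : I -> I -> Prop} {X : I -> Type}
  {phi : forall i j, X i -> X j} (a : Lim ge X phi) i j :
  ge i j -> phi i j (limProj i a) = limProj j a.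
Proof. intro H; exact (proj2_sig a i j H). Qed.

Lemma other_class {T : Type} (sim : T -> T -> Prop) :
  IsEquivRel sim -> MoreThanTwoClasses sim -> forall y, exists w, ~ sim y w.
Proof.
  intros [Hr [Hs Ht]] [a [b [c [Hab [Hac Hbc]]]]] y.
  destruct (classic (sim y a)) as [Ha|Ha]; [|eauto].
  destruct (classic (sim y b)) as [Hb|Hb]; [|eauto].
  exfalso; apply Hab; eauto.
Qed.


Lemma lms_eq {T} (sim : T -> T -> Prop) U : IsLMS sim U -> IsEquivRel sim.
Proof. intros H; apply H. Qed.
Lemma lms_more {T} (sim : T -> T -> Prop) U : IsLMS sim U -> MoreThanTwoClasses sim.
Proof. intros H; apply H. Qed.
Lemma lms_sub {T} (sim : T -> T -> Prop) U : IsLMS sim U -> forall x, IsSubgroupSym sim (U x).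
Proof. intros H; apply H. Qed.
Lemma lms_lm0 {T} (sim : T -> T -> Prop) U : IsLMS sim U ->
  forall x y, sim x y -> InducedEq sim (U x) (U y).
Proof. intros H; apply H. Qed.
Lemma lms_fix {T} (sim : T -> T -> Prop) U : IsLMS sim U -> forall x g, U x g -> g x = x.
Proof. intros H; apply H. Qed.
Lemma lms_uniq {T} (sim : T -> T -> Prop) U : IsLMS sim U ->
  forall x y z, ~ sim x y -> ~ sim x z -> exists! g, U x g /\ g y = z.
Proof. intros H; apply H. Qed.
Lemma lms_sh {T} (sim : T -> T -> Prop) U : IsLMS sim U ->
  forall x y g h, ~ sim x y -> U x g -> U x h -> sim (g y) (h y) ->
     forall w, sim (g w) (h w).
Proof. intros H; apply H. Qed.
Lemma lms_lm2 {T} (sim : T -> T -> Prop) U : IsLMS sim U ->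
  forall x g, GenBy U g -> forall v, U (g x) v <-> exists u, U x u /\ forall z, v (g z) = g (u z).
Proof. intros H; apply H. Qed.
Lemma lms_insym {T} (sim : T -> T -> Prop) U : IsLMS sim U -> forall x g, U x g -> InSym sim g.
Proof. intros H x g Hg. exact (proj1 (lms_sub sim U H x) g Hg). Qed.

Lemma lms_unique {T} (sim : T -> T -> Prop) U : IsLMS sim U ->
  forall x y g h, ~ sim x y -> U x g -> U x h -> g y = h y -> g = h.
Proof.
  intros HL x y g h Hxy Hg Hh E.
  assert (Hz : ~ sim x (g y)).
  { intro C. apply Hxy. destruct (lms_insym sim U HL x g Hg) as [_ Hp].
    apply Hp. rewrite (lms_fix sim U HL x g Hg). exact C. }
  destruct (lms_uniq sim U HL x y (g y) Hxy Hz) as [k [_ Hk]].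
  transitivity k; [symmetry|]; apply Hk; auto.
Qed.

Lemma bij_comp {T} (f g : T -> T) : Bijective f -> Bijective g -> Bijective (fun z => f (g z)).
Proof.
  intros [fi fs] [gi gs]. split.
  - intros x y E. apply gi, fi, E.
  - intro y. destruct (fs y) as [x <-]. destruct (gs x) as [w <-]. eauto.
Qed.

Lemma lms_genby_bij {T} (sim : T -> T -> Prop) U : IsLMS sim U ->
  forall g, GenBy U g -> Bijective g.
Proof.
  intros HL g Hg. induction Hg as [|y u g Hu Hg IH].
  - split; [auto| intro y; exists y; reflexivity].
  - apply bij_comp; auto. apply (lms_insym sim U HL y u Hu).
Qed.

Lemma bij_lift {I : Type} {ge : I -> I -> Prop} {X : I -> Type}
  {phi : forall i j, X i -> X j} (g : Lim ge X phi -> Lim ge X phi) (u : forall i, X i -> X i) :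
  (forall i, Bijective (u i)) -> Compat ge X phi u ->
  (forall b i, limProj i (g b) = u i (limProj i b)) -> Bijective g.
Proof.
  intros Hb Hc Hg. split.
  - intros x y E. apply Lim_eq. intro i. apply (proj1 (Hb i)). rewrite <- !Hg, E. reflexivity.
  - intro b.
    assert (Hw : forall i z, {w | u i w = z}) by
      (intros i z; apply constructive_indefinite_description; apply (proj2 (Hb i))).
    set (w := fun i z => proj1_sig (Hw i z)).
    assert (Hwc : Compat ge X phi w).
    { intros i j H z. apply (proj1 (Hb j)). rewrite <- (Hc i j H). unfold w.
      rewrite (proj2_sig (Hw i z)), (proj2_sig (Hw j (phi i j z))). reflexivity. }
    exists (lmap w Hwc b). apply Lim_eq; intro i. rewrite Hg, lmap_proj. unfold w. apply proj2_sig.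
Qed.

Theorem mainTheorem12 (I : Type) (ge : I -> I -> Prop) (X : I -> Type)
  (sim : forall i, X i -> X i -> Prop) (U : forall i, X i -> (X i -> X i) -> Prop)
  (phi : forall i j, X i -> X j) :
  IsDirectedSet ge ->
  IsInverseSystem ge X sim U phi ->
  (forall a b : Lim ge X phi,
     (exists i, sim i (limProj i a) (limProj i b)) <->
     (forall i, sim i (limProj i a) (limProj i b))) /\
  IsEquivRel (@limSim I ge X phi sim) /\
  (MoreThanTwoClasses (@limSim I ge X phi sim) ->
     IsLMS (@limSim I ge X phi sim) (@limU I ge X phi U) /\
     (forall i, IsHom (@limSim I ge X phi sim) (@limU I ge X phi U) (sim i) (U i) (limProj i)) /\
     (forall i j, ge i j -> forall a : Lim ge X phi, phi i j (limProj i a) = limProj j a) /\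
     (forall (Y : Type) (simY : Y -> Y -> Prop) (V : Y -> (Y -> Y) -> Prop)
             (q : forall i, Y -> X i),
        IsLMS simY V ->
        (forall i, IsHom simY V (sim i) (U i) (q i)) ->
        (forall i j, ge i j -> forall y, phi i j (q i y) = q j y) ->
        exists! psi : Y -> Lim ge X phi,
          IsHom simY V (@limSim I ge X phi sim) (@limU I ge X phi U) psi /\
          (forall i y, limProj i (psi y) = q i y))).
Proof.
  intros HD HS.
  destruct HD as [[i0 _] [Hrefl [_ [Htr Hdir]]]].
  destruct HS as [HL [HH [Hid Hcomp]]].
  assert (hsim : forall i j, ge i j -> forall x x', sim i x x' <-> sim j (phi i j x) (phi i j x'))
    by (intros i j H; apply (proj1 (HH i j H))).
  assert (hU : forall i j, ge i j -> forall x u, U i x u ->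
     exists v, U j (phi i j x) v /\ forall z, phi i j (u z) = v (phi i j z))
    by (intros i j H; apply (proj2 (HH i j H))).
  assert (Heq : forall i, IsEquivRel (sim i)) by (intro i; exact (lms_eq _ _ (HL i))).
  assert (exall : forall (a b : Lim ge X phi) i, sim i (limProj i a) (limProj i b) ->
            forall k, sim k (limProj k a) (limProj k b)).
  { intros a b i Hi k. destruct (Hdir i k) as [m [Hmi Hmk]].
    assert (Hm : sim m (limProj m a) (limProj m b)).
    { apply (hsim m i Hmi). rewrite (thr a m i Hmi), (thr b m i Hmi). exact Hi. }
    apply (hsim m k Hmk) in Hm. rewrite (thr a m k Hmk), (thr b m k Hmk) in Hm. exact Hm. }
  assert (Lall : forall a b : Lim ge X phi, limSim sim a b -> forall k, sim k (limProj k a) (limProj k b)).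
  { intros a b [i Hi]. eauto. }
  assert (Lequiv : IsEquivRel (@limSim I ge X phi sim)).
  { split; [|split].
    - intro a. exists i0. apply (proj1 (Heq i0)).
    - intros a b [i Hi]. exists i. apply (proj1 (proj2 (Heq i))). exact Hi.
    - intros a b c Hab Hbc. exists i0. apply (proj2 (proj2 (Heq i0))) with (limProj i0 b); auto. }
  split; [intros a b; split; [intros [i Hi]; eauto | intro H; exists i0; auto]|].
  split; [exact Lequiv|].
  intro Hmore.
  assert (LM1L : forall a y z : Lim ge X phi, ~ limSim sim a y -> ~ limSim sim a z ->
     exists u : forall i, X i -> X i, (forall i, U i (limProj i a) (u i)) /\
        Compat ge X phi u /\ forall i, u i (limProj i y) = limProj i z).
  { intros a y z Hy Hz.
    assert (Hn : forall i, ~ sim i (limProj i a) (limProj i y)) by (intros i C; apply Hy; exists i; exact C).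
    assert (Hnz : forall i, ~ sim i (limProj i a) (limProj i z)) by (intros i C; apply Hz; exists i; exact C).
    assert (Hc : forall i, {g | U i (limProj i a) g /\ g (limProj i y) = limProj i z}).
    { intro i. apply constructive_indefinite_description.
      destruct (lms_uniq _ _ (HL i) _ _ _ (Hn i) (Hnz i)) as [g [Hg _]]. eauto. }
    exists (fun i => proj1_sig (Hc i)). split; [intro i; apply (proj2_sig (Hc i))|].
    split; [|intro i; apply (proj2_sig (Hc i))].
    intros i j H w.
    destruct (proj2_sig (Hc i)) as [Hgi Hgy].
    destruct (hU i j H _ _ Hgi) as [v [Hv Hvc]].
    rewrite (thr a i j H) in Hv.
    destruct (proj2_sig (Hc j)) as [Hgj Hgyj].
    assert (E : v = proj1_sig (Hc j)).
    { apply (lms_unique _ _ (HL j) _ (limProj j y) _ _ (Hn j) Hv Hgj).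
      rewrite Hgyj, <- (thr y i j H), <- Hvc, Hgy, (thr z i j H). reflexivity. }
    rewrite Hvc, E. reflexivity. }
  assert (limU_sym : forall a g, @limU I ge X phi U a g -> InSym (@limSim I ge X phi sim) g).
  { intros a g [u [Hu [Hc Hg]]].
    assert (Hi : forall i, InSym (sim i) (u i)) by (intro i; exact (lms_insym _ _ (HL i) _ _ (Hu i))).
    split.
    - apply (bij_lift g u); auto. intro i; apply Hi.
    - intros x y; split.
      + intros [i H]; exists i. rewrite !Hg. apply (proj1 (proj2 (Hi i) _ _)); exact H.
      + intros [i H]; exists i. rewrite !Hg in H. apply (proj2 (proj2 (Hi i) _ _)); exact H. }
  assert (LMfix : forall a g, @limU I ge X phi U a g -> g a = a).
  { intros a g [u [Hu [Hc Hg]]]. apply Lim_eq; intro i. rewrite Hg.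
    apply (lms_fix _ _ (HL i) _ _ (Hu i)). }
  assert (GenLift : forall g, GenBy (@limU I ge X phi U) g ->
     exists G : forall i, X i -> X i, (forall i, GenBy (U i) (G i)) /\ Compat ge X phi G /\
        forall b i, limProj i (g b) = G i (limProj i b)).
  { intros g Hg. induction Hg as [|y u g Hu Hg IH].
    - exists (fun i z => z). split; [intro; constructor|]. split; [intros i j H z|intros b i]; reflexivity.
    - destruct Hu as [uu [Huu [Hcu Hgu]]]. destruct IH as [G [HG [HcG HgG]]].
      exists (fun i z => uu i (G i z)). split; [intro i; apply GenBy_step with (limProj i y); auto|].
      split.
      + intros i j H z. rewrite (Hcu i j H), (HcG i j H). reflexivity.
      + intros b i. rewrite Hgu, HgG. reflexivity. }
  assert (LM1 : forall a y z, ~ limSim sim a y -> ~ limSim sim a z ->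
     exists! g, @limU I ge X phi U a g /\ g y = z).
  { intros a y z Hy Hz. destruct (LM1L a y z Hy Hz) as [u [Hu [Hc Hyz]]].
    exists (lmap u Hc). split. split.
    - exists u. split; [auto|split; [auto|intros; reflexivity]].
    - apply Lim_eq; intro i; rewrite lmap_proj; apply Hyz.
    - intros g' [Hg' Hg'y]. destruct Hg' as [u' [Hu' [Hc' Hg'u]]].
      apply functional_extensionality; intro b. apply Lim_eq; intro i.
      rewrite lmap_proj, Hg'u.
      assert (E : u i = u' i).
      { apply (lms_unique _ _ (HL i) (limProj i a) (limProj i y)).
        - intro C; apply Hy; exists i; exact C.
        - apply Hu.
        - apply Hu'.
        - rewrite Hyz, <- Hg'u, Hg'y; reflexivity. }
      rewrite E; reflexivity. }
  assert (LM0h : forall a b, limSim sim a b -> forall g, @limU I ge X phi U a g ->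
     exists h, @limU I ge X phi U b h /\ forall z, limSim sim (g z) (h z)).
  { intros a b Hab g Hg.
    pose proof Lequiv as [Lr [Ls Lt]].
    destruct (other_class _ Lequiv Hmore b) as [w Hw].
    pose proof (LMfix a g Hg) as Hgfix.
    assert (Haw : ~ limSim sim a w) by (intro C; apply Hw; eauto).
    assert (Hbgw : ~ limSim sim b (g w)).
    { intro C. apply Haw. apply (proj2 (limU_sym a g Hg) a w). rewrite Hgfix. eauto. }
    destruct (LM1L b w (g w) Hw Hbgw) as [v [Hv [Hcv Hvw]]].
    exists (lmap v Hcv). split.
    { exists v. split; [auto|split; [auto|intros; reflexivity]]. }
    intro z. destruct Hg as [u [Hu [Hcu Hgu]]].
    exists i0. rewrite Hgu, lmap_proj.
    pose proof (Lall a b Hab i0) as Habi.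
    destruct (proj1 (lms_lm0 _ _ (HL i0) _ _ Habi) (u i0) (Hu i0)) as [h' [Hh' Hsh']].
    assert (Hwi : ~ sim i0 (limProj i0 b) (limProj i0 w)) by (intro C; apply Hw; exists i0; exact C).
    assert (Hall : forall w', sim i0 (v i0 w') (h' w')).
    { apply (lms_sh _ _ (HL i0) _ _ _ _ Hwi (Hv i0) Hh').
      rewrite Hvw, Hgu. apply Hsh'. }
    destruct (Heq i0) as [_ [Hs Ht]].
    apply Ht with (h' (limProj i0 z)); auto. }
  split.
  { split; [exact Lequiv|]. split; [exact Hmore|].
    split.
    { intro a. split; [intros g Hg; exact (limU_sym a g Hg)|].
      split.
      { exists (fun i z => z). split; [intro i; apply (lms_sub _ _ (HL i))|].
        split; intros; reflexivity. }
      split.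
      { intros g h [u [Hu [Hcu Hgu]]] [w [Hw [Hcw Hhw]]].
        exists (fun i z => w i (u i z)). split.
        - intro i. apply (proj1 (proj2 (proj2 (lms_sub _ _ (HL i) _)))); auto.
        - split.
          + intros i j H z. rewrite (Hcw i j H), (Hcu i j H). reflexivity.
          + intros b i. rewrite Hhw, Hgu. reflexivity. }
      intros g [u [Hu [Hcu Hgu]]].
      assert (Hinv : forall i, {h | U i (limProj i a) h /\ (forall z, h (u i z) = z) /\
                                    (forall z, u i (h z) = z)}).
      { intro i. apply constructive_indefinite_description.
        apply (proj2 (proj2 (proj2 (lms_sub _ _ (HL i) _)))). apply Hu. }
      set (hh := fun i => proj1_sig (Hinv i)).
      assert (Hhc : Compat ge X phi hh).
      { intros i j H z.
        destruct (lms_insym _ _ (HL j) _ _ (Hu j)) as [[Hinj _] _].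
        apply Hinj. rewrite <- (Hcu i j H). unfold hh.
        rewrite (proj2 (proj2 (proj2_sig (Hinv i)))), (proj2 (proj2 (proj2_sig (Hinv j)))).
        reflexivity. }
      exists (lmap hh Hhc). split; [|split].
      - exists hh. split; [intro i; apply (proj2_sig (Hinv i))|split; [auto|intros; reflexivity]].
      - intro z. apply Lim_eq; intro i. rewrite lmap_proj, Hgu. unfold hh.
        apply (proj1 (proj2 (proj2_sig (Hinv i)))).
      - intro z. apply Lim_eq; intro i. rewrite Hgu, lmap_proj. unfold hh.
        apply (proj2 (proj2 (proj2_sig (Hinv i)))). }
    split.
    { intros a b Hab. split; [apply LM0h; auto|].
      intros h Hh. pose proof Lequiv as [Lr [Ls Lt]].
      destruct (LM0h b a (Ls _ _ Hab) h Hh) as [g [Hg Hgh]].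
      exists g; split; auto. }
    split; [exact LMfix|].
    split; [exact LM1|].
    split; [intros a g Hg; rewrite (LMfix a g Hg); apply (proj1 Lequiv)|].
    split.
    { intros a y z Hy Hz. destruct (LM1 a y z Hy Hz) as [g [[Hg E] _]].
      exists g; split; auto. rewrite E; apply (proj1 Lequiv). }
    split.
    { intros a y g h Hy [u [Hu [Hcu Hgu]]] [u' [Hu' [Hcu' Hhu]]] Hgh w.
      exists i0. rewrite Hgu, Hhu.
      apply (lms_sh _ _ (HL i0) (limProj i0 a) (limProj i0 y) (u i0) (u' i0)).
      - intro C; apply Hy; exists i0; exact C.
      - apply Hu.
      - apply Hu'.
      - pose proof (Lall _ _ Hgh i0) as K. rewrite Hgu, Hhu in K. exact K. }
    intros a g Hg v.
    destruct (GenLift g Hg) as [G [HG [HcG HgG]]].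
    assert (Gb : forall i, Bijective (G i)) by (intro i; exact (lms_genby_bij _ _ (HL i) _ (HG i))).
    split.
    - intros [vv [Hvv [Hcv Hvb]]].
      assert (Hw : forall i, {w | U i (limProj i a) w /\ forall z, vv i (G i z) = G i (w z)}).
      { intro i. apply constructive_indefinite_description.
        apply (lms_lm2 _ _ (HL i) _ _ (HG i)). rewrite <- HgG. apply Hvv. }
      set (ww := fun i => proj1_sig (Hw i)).
      assert (Hcw : Compat ge X phi ww).
      { intros i j H z. apply (proj1 (Gb j)). unfold ww.
        rewrite <- (HcG i j H), <- (proj2 (proj2_sig (Hw i))), (Hcv i j H), (HcG i j H).
        apply (proj2 (proj2_sig (Hw j))). }
      exists (lmap ww Hcw). split.
      + exists ww. split; [intro i; apply (proj2_sig (Hw i))|split; [auto|intros; reflexivity]].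
      + intro z. apply Lim_eq; intro i. rewrite Hvb, !HgG, lmap_proj. unfold ww.
        apply (proj2 (proj2_sig (Hw i))).
    - intros [u [Hu Hvu]]. destruct Hu as [w [Hw [Hcw Hgw]]].
      assert (Hv : forall i, {vv | U i (G i (limProj i a)) vv /\ forall z, vv (G i z) = G i (w i z)}).
      { intro i.
        assert (hG : forall z, {t | G i t = z}) by
          (intro z; apply constructive_indefinite_description; apply (proj2 (Gb i))).
        assert (Hvz : forall z, G i (w i (proj1_sig (hG (G i z)))) = G i (w i z)).
        { intro z. f_equal. f_equal. apply (proj1 (Gb i)). apply (proj2_sig (hG (G i z))). }
        exists (fun z => G i (w i (proj1_sig (hG z)))). split; [|exact Hvz].
        apply (lms_lm2 _ _ (HL i) _ _ (HG i)). exists (w i); split; auto. }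
      set (vv := fun i => proj1_sig (Hv i)).
      assert (Hcv : Compat ge X phi vv).
      { intros i j H z. destruct (proj2 (Gb i) z) as [t <-]. unfold vv.
        rewrite (proj2 (proj2_sig (Hv i)) t).
        rewrite (HcG i j H (w i t)), (Hcw i j H t), (HcG i j H t).
        rewrite (proj2 (proj2_sig (Hv j))). reflexivity. }
      exists vv. split; [intro i; rewrite HgG; apply (proj2_sig (Hv i))|].
      split; [exact Hcv|].
      intros b i.
      destruct (proj2 (bij_lift g G Gb HcG HgG) b) as [c <-].
      rewrite Hvu, !HgG, Hgw. unfold vv. symmetry. apply (proj2 (proj2_sig (Hv i))). }
  split.
  { intro i. split.
    - intros a b; split; [intro H; apply Lall; exact H| intro H; exists i; exact H].
    - intros a g [u [Hu [_ Hgu]]]. exists (u i). split; auto. }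
  split; [intros i j H a; apply thr; exact H|].
  intros Y simY V q HY Hq Hqc.
  set (psi := fun y : Y => exist (fun f : forall i, X i => forall i j, ge i j -> phi i j (f i) = f j)
                  (fun i => q i y) (fun i j H => Hqc i j H y) : Lim ge X phi).
  exists psi. split; [split; [split|]|].
  - intros y y'. split.
    + intro H. exists i0. apply (proj1 (Hq i0)). exact H.
    + intros [i Hi]. apply (proj1 (Hq i)). exact Hi.
  - intros y u Hu.
    destruct (other_class _ (lms_eq _ _ HY) (lms_more _ _ HY) y) as [w Hw].
    assert (Hnq : forall i, ~ sim i (q i y) (q i w)) by (intros i C; apply Hw; apply (proj1 (Hq i)); exact C).
    assert (Hs : forall i, {v | U i (q i y) v /\ forall z, q i (u z) = v (q i z)}).
    { intro i. apply constructive_indefinite_description. apply (proj2 (Hq i)); exact Hu. }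
    set (vv := fun i => proj1_sig (Hs i)).
    assert (Hcv : Compat ge X phi vv).
    { intros i j H z. unfold vv.
      destruct (proj2_sig (Hs i)) as [Hvi Hvic].
      destruct (hU i j H _ _ Hvi) as [v' [Hv' Hv'c]].
      rewrite Hqc in Hv'; [|exact H].
      destruct (proj2_sig (Hs j)) as [Hvj Hvjc].
      assert (E : v' = proj1_sig (Hs j)).
      { apply (lms_unique _ _ (HL j) _ (q j w) _ _ (Hnq j) Hv' Hvj).
        rewrite <- (Hqc i j H w), <- Hv'c, <- Hvic.
        rewrite (Hqc i j H (u w)), (Hqc i j H w). apply Hvjc. }
      rewrite Hv'c, E. reflexivity. }
    exists (lmap vv Hcv). split.
    + exists vv. split; [intro i; apply (proj2_sig (Hs i))|split; [exact Hcv|intros; reflexivity]].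
    + intro z. apply Lim_eq; intro i. rewrite lmap_proj. apply (proj2 (proj2_sig (Hs i))).
  - intros i y. reflexivity.
  - intros psi' [_ Hp']. apply functional_extensionality; intro y. apply Lim_eq; intro i.
    rewrite Hp'. reflexivity.
Qed.
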